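(* Let $a,a_1,a_2,b,b_1,b_2,x,x_1,x_2$ be non-negative reals such that $x_1+x_2\le x$, $a_1+a_2\le a$, $b_1+b_2\le b$ and $x\le\min\{a,b\}$. Then $$a_1b_2+a_1x_2+b_1a_2+b_1x_2+x_1a_2+x_1b_2\le ab+x\max\{a,b\}.$$ *)

(* Defs.v *)
From Stdlib Require Import Reals Lra.

(* Main.v *)
Require Import Defs.
From Stdlib Require Import Reals Lra Psatz.
Open Scope R_scope.
Lemma half : forall a a1 a2 b b1 b2 x x1 x2 : R, 
 0 <= a1 -> 0 <= a2 -> 0 <= b1 -> 0 <= b2 -> 0 <= x1 -> 0 <= x2 ->
 x1 + x2 <= x -> a1 + a2 <= a -> b1 + b2 <= b -> x <= a -> a <= b ->
 b2 + x2 <= b1 + x1 ->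
  a1 * b2 + a1 * x2 + b1 * a2 + b1 * x2 + x1 * a2 + x1 * b2
    <= a * b + x * b.
intros.
assert (a1*(b2+x2) <= a1*(b1+x1)) by (apply Rmult_le_compat_l; lra).
assert ((a1+a2)*(b1+x1) <= a*(b1+x1)) by (apply Rmult_le_compat_r; lra).
assert (x2*b1 <= (x-x1)*b1) by (apply Rmult_le_compat_r; lra).
assert (x1*b2 <= x*(b-b1)) by (apply Rmult_le_compat; lra).
assert (0 <= (a-x1)*(b-b1)) by (apply Rmult_le_pos; lra).
assert (0 <= x1*(b-a)) by (apply Rmult_le_pos; lra).
nra.
Qed.

Lemma full : forall a a1 a2 b b1 b2 x x1 x2 : R, 
 0 <= a1 -> 0 <= a2 -> 0 <= b1 -> 0 <= b2 -> 0 <= x1 -> 0 <= x2 ->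
 x1 + x2 <= x -> a1 + a2 <= a -> b1 + b2 <= b -> x <= a -> a <= b ->
  a1 * b2 + a1 * x2 + b1 * a2 + b1 * x2 + x1 * a2 + x1 * b2
    <= a * b + x * b.
intros.
destruct (Rle_dec (b2 + x2) (b1 + x1)).
- apply half; lra.
- pose proof (half a a2 a1 b b2 b1 x x2 x1). lra.
Qed.

Theorem lemma6p3 (a a1 a2 b b1 b2 x x1 x2 : R)
  (ha : 0 <= a) (ha1 : 0 <= a1) (ha2 : 0 <= a2)
  (hb : 0 <= b) (hb1 : 0 <= b1) (hb2 : 0 <= b2)
  (hx : 0 <= x) (hx1 : 0 <= x1) (hx2 : 0 <= x2)
  (Hx : x1 + x2 <= x) (Ha : a1 + a2 <= a) (Hb : b1 + b2 <= b)
  (Hmin : x <= Rmin a b) :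
  a1 * b2 + a1 * x2 + b1 * a2 + b1 * x2 + x1 * a2 + x1 * b2
    <= a * b + x * Rmax a b.
Proof.
  unfold Rmin, Rmax in *.
  destruct (Rle_dec a b).
  - apply full; lra.
  - pose proof (full b b1 b2 a a1 a2 x x1 x2). nra.
Qed.
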